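(* In the model of the context, suppose $\tau+\rho(\gamma,\infty)\tau-\rho(\gamma,\infty)>0$. If the primary protection constraint $\Pr[\mathsf{SIR}_1<\gamma]\le\tau$ holds, then $\beta\ge\beta_{\min}$, where $$\beta_{\min}=\left(\frac{P_1^{2/\alpha}\rho_0(\gamma,\infty)(1-\tau)}{\pi d^2\left(\int_0^\infty\frac{du}{1+u^{\alpha/2}}\right)\lambda_1P_2^{2/\alpha}\left[\tau+\rho(\gamma,\infty)\tau-\rho(\gamma,\infty)\right]}\right)^{\alpha/2}.$$
   Context: Parameters: primary TX density $\lambda_1$, primary and secondary transmit powers $P_1,P_2$, secondary pair distance $d$, path-loss exponent $\alpha>2$, primary decoding threshold $\gamma>0$, tolerated primary outage $\tau\in(0,1)$, secondary decoding threshold $\beta>0$. Define $\rho_0(a,t)=a^{2/\alpha}\int_0^t\frac{du}{1+u^{\alpha/2}}$ and $\rho(a,t)=a^{2/\alpha}\int_{a^{-2/\alpha}}^{t}\frac{du}{1+u^{\alpha/2}}$. In the model, the active secondary TXs have density $\frac{1}{\pi d^2\rho_0(\beta,\infty)}$, and the SIR outage probability of a typical primary user is $$\Pr[\mathsf{SIR}_1<\gamma]=1-\frac{\lambda_1P_2^{2/\alpha}}{\frac{\rho_0(\gamma,\infty)P_1^{2/\alpha}}{\pi d^2\rho_0(\beta,\infty)}+\lambda_1P_2^{2/\alpha}\left(\rho(\gamma,\infty)+1\right)}.$$ *)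

(* Defs.v *)
From HB Require Import structures.
From mathcomp Require Import all_boot all_order all_algebra.
From mathcomp Require Import all_classical all_reals all_analysis.
Set Implicit Arguments. Unset Strict Implicit. Unset Printing Implicit Defensive.
Import Order.TTheory GRing.Theory Num.Theory.
Import numFieldNormedType.Exports.
Local Open Scope classical_set_scope.
Local Open Scope ring_scope.

Section Defs.
Variable R : realType.

Definition kern (alpha : R) (u : R) : R := (1 + u `^ (alpha / 2))^-1.

Definition tail_int (alpha lo : R) : R :=
  Rintegral lebesgue_measure `[lo, +oo[ (kern alpha).

Definition rho0_inf (alpha a : R) : R := a `^ (2 / alpha) * tail_int alpha 0.

Definition rho_inf (alpha a : R) : R :=
  a `^ (2 / alpha) * tail_int alpha (a `^ (- (2 / alpha))).

Definition sec_density (alpha beta d : R) : R :=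
  (pi * d ^+ 2 * rho0_inf alpha beta)^-1.

Definition primary_outage (lambda1 P1 P2 d alpha gamma beta : R) : R :=
  1 - lambda1 * P2 `^ (2 / alpha) /
      (rho0_inf alpha gamma * P1 `^ (2 / alpha) * sec_density alpha beta d
       + lambda1 * P2 `^ (2 / alpha) * (rho_inf alpha gamma + 1)).

Definition beta_min (lambda1 P1 P2 d alpha gamma tau : R) : R :=
  (P1 `^ (2 / alpha) * rho0_inf alpha gamma * (1 - tau) /
   (pi * d ^+ 2 * tail_int alpha 0 * lambda1 * P2 `^ (2 / alpha) *
    (tau + rho_inf alpha gamma * tau - rho_inf alpha gamma))) `^ (alpha / 2).

End Defs.

(* Main.v *)
Require Import Defs.
From HB Require Import structures.
From mathcomp Require Import all_boot all_order all_algebra.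
From mathcomp Require Import all_classical all_reals all_analysis.
From mathcomp Require Import ring lra.
Import Order.TTheory GRing.Theory Num.Theory.
Local Open Scope ring_scope.

Lemma tail_int_ge0 (R : realType) (alpha lo : R) : 0 <= tail_int alpha lo.
Proof.
rewrite /tail_int; apply: Rintegral_ge0 => x _.
by rewrite /kern invr_ge0 addr_ge0 // powR_ge0.
Qed.

Theorem lemma2 (R : realType) (lambda1 P1 P2 d alpha gamma tau beta : R) :
  0 < lambda1 -> 0 < P1 -> 0 < P2 -> 0 < d -> 2 < alpha ->
  0 < gamma -> 0 < tau -> tau < 1 -> 0 < beta ->
  0 < tau + rho_inf alpha gamma * tau - rho_inf alpha gamma ->
  primary_outage lambda1 P1 P2 d alpha gamma beta <= tau ->
  beta_min lambda1 P1 P2 d alpha gamma tau <= beta.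
Proof.
move=> hl hP1 hP2 hd ha hg ht0 ht1 hb hK hout.
have a2 : alpha / 2 != 0 by apply/lt0r_neq0/divr_gt0; lra.
have rho0 : 0 <= rho_inf alpha gamma.
  by rewrite /rho_inf mulr_ge0 ?powR_ge0 ?tail_int_ge0.
have := @tail_int_ge0 R alpha 0; rewrite le_eqVlt => /orP[/eqP I0|Ipos].
  rewrite /beta_min /rho0_inf -I0 mulr0 mulr0 !mul0r powR0 //; lra.
move: hout hK; rewrite /beta_min /primary_outage /sec_density /rho0_inf.
set I := tail_int alpha 0; set rho := rho_inf alpha gamma.
set g := gamma `^ (2 / alpha); set b := beta `^ (2 / alpha).
set p1 := P1 `^ (2 / alpha); set p2 := P2 `^ (2 / alpha).
have gp : 0 < g by apply: powR_gt0.
have bp : 0 < b by apply: powR_gt0.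
have p1p : 0 < p1 by apply: powR_gt0.
have p2p : 0 < p2 by apply: powR_gt0.
have pip : 0 < pi :> R by apply: pi_gt0.
set K := tau + rho * tau - rho => hout hK.
have Mp : 0 < pi * d ^+ 2 * (b * I) by rewrite !mulr_gt0 // exprn_gt0.
set M := pi * d ^+ 2 * (b * I) in hout Mp.
set s := M^-1 in hout.
have sM : s * M = 1 by rewrite mulVf // gt_eqF.
have sp : 0 < s by rewrite invr_gt0.
set D := g * I * p1 * s + lambda1 * p2 * (rho + 1) in hout.
have Dp : 0 < D.
  rewrite /D addr_gt0 //; first by rewrite !mulr_gt0.
  by apply: mulr_gt0; [apply: mulr_gt0|apply: (lt_le_trans ltr01); rewrite lerDr].
have Xeq : p1 * (g * I) * (1 - tau) = (1 - tau) * (g * I * p1) by ring.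
have Meq : pi * d ^+ 2 * I * lambda1 * p2 * K * b = lambda1 * p2 * K * M.
  by rewrite /M; ring.
have Dgt : 0 < pi * d ^+ 2 * I * lambda1 * p2 * K by rewrite !mulr_gt0 // exprn_gt0.
rewrite Xeq; move: Meq Dgt; set Y := pi * d ^+ 2 * I * lambda1 * p2 * K => Meq Dgt.
have Ip : 0 < I := Ipos.
have Ddef : D = g * I * p1 * s + lambda1 * p2 * (rho + 1) by [].
have Kdef : K = tau + rho * tau - rho by [].
have Ydef : Y = pi * d ^+ 2 * I * lambda1 * p2 * K by [].
clearbody Y D s M K p1 p2 g I rho.
have h1 : (1 - tau) * D <= lambda1 * p2.
  have : 1 - tau <= lambda1 * p2 / D by lra.
  by rewrite ler_pdivlMr // mulrC.
have h2 : (1 - tau) * (g * I * p1 * s) <= lambda1 * p2 * K.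
  rewrite Kdef; move: h1; rewrite Ddef; lra.
have h3 : (1 - tau) * (g * I * p1) <= lambda1 * p2 * K * M.
  have e : (1 - tau) * (g * I * p1) = (1 - tau) * (g * I * p1 * s) * M.
    by rewrite -!mulrA sM mulr1.
  by rewrite e ler_pM2r.
have Xle : (1 - tau) * (g * I * p1) / Y <= b.
  by rewrite ler_pdivrMr // [b * Y]mulrC Meq.
have Xge0 : 0 <= (1 - tau) * (g * I * p1) / Y.
  apply: divr_ge0; last exact: ltW.
  apply: mulr_ge0; first lra.
  by rewrite !mulr_ge0 // ltW.
apply: le_trans (ge0_ler_powR _ _ _ Xle) _.
- by apply: ltW; apply: divr_gt0 => //; lra.
- by rewrite nnegrE.
- by rewrite nnegrE ltW.
rewrite /b -powRrM.
have an0 : alpha != 0 by apply/lt0r_neq0; lra.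
have -> : 2 / alpha * (alpha / 2) = 1 :> R by field.
by rewrite powRr1 // ltW.
Qed.
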